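(* Let $\mathit{VI}$ be a finite set of variables with $\#\mathit{VI}=n$. For each $sh_1,sh_2\in\mathit{SH}$, each $V\in\wp(\mathit{VI})$ and each $k\in\mathbb{N}$ with $1<k\le n$: if $\rho_{\mathit{TSD}_k}(sh_1)\subseteq\rho_{\mathit{TSD}_k}(sh_2)$ then $\mathrm{rel}(V,sh_1)^\star\subseteq\mathrm{rel}(V,sh_2)^\star$.
   Context: $\mathit{SG}=\wp(\mathit{VI})\setminus\{\emptyset\}$, $\mathit{SH}=\wp(\mathit{SG})$. $\rho_{\mathit{TSD}_k}(sh)=\{\,S\in\mathit{SG}\mid \forall T\subseteq S:\ \#T<k\implies S=\bigcup\{U\in sh\mid T\subseteq U\subseteq S\}\,\}$. $\mathrm{rel}(V,sh)=\{S\in sh\mid S\cap V\ne\emptyset\}$; $sh^\star=\{S\in\mathit{SG}\mid\exists sh'\subseteq sh: S=\bigcup sh'\}$. *)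

(* Defs.v *)
From mathcomp Require Import all_boot.
Set Implicit Arguments. Unset Strict Implicit. Unset Printing Implicit Defensive.

Definition SG (VI : finType) : {set {set VI}} := [set S : {set VI} | S != set0].

Definition is_SH (VI : finType) (sh : {set {set VI}}) : Prop := sh \subset SG VI.

Definition rho_TSD (VI : finType) (k : nat) (sh : {set {set VI}}) : {set {set VI}} :=
  [set S in SG VI | [forall T : {set VI},
     (T \subset S) ==> (#|T| < k) ==>
     (S == \bigcup_(U in sh | (T \subset U) && (U \subset S)) U)]].

Definition relSh (VI : finType) (V : {set VI}) (sh : {set {set VI}}) : {set {set VI}} :=
  [set S in sh | S :&: V != set0].

Definition star (VI : finType) (sh : {set {set VI}}) : {set {set VI}} :=
  [set S in SG VI | [exists sh' : {set {set VI}},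
     (sh' \subset sh) && (S == \bigcup_(U in sh') U)]].

Arguments SG : clear implicits.
Arguments rho_TSD {VI} k sh.
Arguments relSh {VI} V sh.
Arguments star {VI} sh.
Arguments is_SH {VI} sh.

(* Main.v *)
Require Import Defs.
From mathcomp Require Import all_boot.

Lemma rhoP_pair {VI : finType} {k : nat} {sh : {set {set VI}}} {S : {set VI}} {x v} :
  1 < k -> S \in rho_TSD k sh -> x \in S -> v \in S ->
  exists2 W, W \in sh & [/\ x \in W, v \in W & W \subset S].
Proof.
move=> hk; rewrite /rho_TSD inE => /andP [_ /forallP /(_ [set x])].
move=> H xS vS; move: H; rewrite sub1set xS cards1 hk /= => /eqP ES.
move: vS; rewrite {1}ES => /bigcupP [W /andP [WS /andP [xW WsS]] vW].
by exists W => //; split => //; rewrite -sub1set.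
Qed.

Lemma in_rho (VI : finType) (k : nat) (sh : {set {set VI}}) (S : {set VI}) :
  S \in sh -> S != set0 -> S \in rho_TSD k sh.
Proof.
move=> Ssh Sn0; rewrite /rho_TSD inE /SG inE Sn0 /=.
apply/forallP => T; apply/implyP => TS; apply/implyP => _.
rewrite eqEsubset; apply/andP; split.
  by apply: (bigcup_max S) => //; rewrite Ssh TS subxx.
by apply/bigcupsP => U /andP [_ /andP [_ ->]].
Qed.

Theorem lemma3p19 (VI : finType) (n : nat) (hn : #|VI| = n)
  (sh1 sh2 : {set {set VI}}) (h1 : is_SH sh1) (h2 : is_SH sh2)
  (V : {set VI}) (k : nat) (hk1 : 1 < k) (hkn : k <= n) :
  rho_TSD k sh1 \subset rho_TSD k sh2 ->
  star (relSh V sh1) \subset star (relSh V sh2).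
Proof.
move=> hsub; apply/subsetP => S; rewrite /star !inE => /andP [SG0 /existsP [sh' /andP [sub /eqP ES]]].
rewrite SG0 /=; apply/existsP; exists [set W in relSh V sh2 | W \subset S].
apply/andP; split.
  by apply/subsetP => W; rewrite inE => /andP [].
rewrite eqEsubset; apply/andP; split; last first.
  by apply/bigcupsP => W; rewrite inE => /andP [_].
apply/subsetP => x; rewrite {1}ES => /bigcupP [U Ush' xU].
have := subsetP sub U Ush'; rewrite inE => /andP [Ush1 /set0Pn [v]].
rewrite inE => /andP [vU vV].
have Un0 : U != set0 by apply/set0Pn; exists x.
have Urho : U \in rho_TSD k sh2 by apply: (subsetP hsub); apply: in_rho.
have [W Wsh2 [xW vW WU]] := rhoP_pair hk1 Urho xU vU.
have US : U \subset S by rewrite ES; apply: (bigcup_max U).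
apply/bigcupP; exists W => //.
rewrite !inE Wsh2 (subset_trans WU US) andbT.
by apply/set0Pn; exists v; rewrite inE vW.
Qed.
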